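(* Let $P\subseteq M_{\mathbb R}$ be a $d$-dimensional lattice simplex ($M$ of rank $d$) with vertices $v_0,\dots,v_d$, let $\tilde v_i:=(v_i,1)\in M\oplus\mathbb Z$, and let $\Pi:=\{\sum_{i=0}^d\lambda_i\tilde v_i:0\le\lambda_i<1\}$ be the half-open parallelepiped they span, with interior $\mathrm{int}(\Pi)=\{\sum\lambda_i\tilde v_i:0<\lambda_i<1\}$. Then \[\widetilde S(P,t)=\sum_{x\in\mathrm{int}(\Pi)\cap(M\oplus\mathbb Z)}t^{x_{d+1}},\] where $x_{d+1}$ is the last coordinate of $x$. In particular $\deg\widetilde S(P,t)\le\deg h^*_P(t)$.
   Context: For a lattice polytope $Q$ of dimension $k$, $h^*_Q(t)=(1-t)^{k+1}\sum_{j\ge0}\#(jQ\cap\text{lattice})\,t^j$, with $h^*_\emptyset=1$, $\dim\emptyset=-1$. For an Eulerian poset $\mathcal P$ of rank $d$ with minimum $\hat0$, maximum $\hat1$: if $d=0$, $g_{\mathcal P}=h_{\mathcal P}=1$; if $d>0$, $h_{\mathcal P}(t)=\sum_{\hat0<x\le\hat1}(t-1)^{\mathrm{rk}(x)-1}g_{[x,\hat1]}(t)$ and $g_{\mathcal P}(t)=\sum_{0\le i<d/2}(h_i-h_{i-1})t^i$ where $h_{\mathcal P}=\sum h_it^i$, $h_{-1}=0$. For faces $F\le P$ (including $\emptyset$), $[F,P]$ is the poset of faces between them. $\widetilde S(P,t)=\sum_{\emptyset\le F\le P}(-1)^{\dim P-\dim F}h^*_F(t)\,g_{[F,P]}(t)$.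 *)

(* Defs.v *)
From HB Require Import structures.
From mathcomp Require Import all_boot all_order all_algebra.
From mathcomp Require Import finmap.
From mathcomp Require Import boolp classical_sets cardinality.

Set Implicit Arguments.
Unset Strict Implicit.
Unset Printing Implicit Defensive.

Import Order.TTheory GRing.Theory Num.Theory.
Local Open Scope ring_scope.

(* The lattice M = Z^d is 'rV[int]_d, M_R is modelled by 'rV[rat]_d.  Faces of the simplex are indexed by the
   subsets S of the vertex set 'I_d.+1 (S = set0 is the empty face), the
   face being conv{v i | i in S}, of dimension #|S| - 1. *)

Section Simplex.
Variable d : nat.

Definition ratv (x : 'rV[int]_d) : 'rV[rat]_d := map_mx (fun z : int => z%:~R) x.

(* affine independence of v_0, ..., v_d (so that P is d-dimensional) *)
Definition affinely_independent (v : 'I_d.+1 -> 'rV[int]_d) : Prop :=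
  forall mu : 'I_d.+1 -> rat,
    \sum_i mu i = 0 -> \sum_i mu i *: ratv (v i) = 0 -> forall i, mu i = 0.

Definition in_dilate (v : 'I_d.+1 -> 'rV[int]_d) (S : {set 'I_d.+1}) (j : nat)
    (x : 'rV[int]_d) : Prop :=
  exists lam : 'I_d.+1 -> rat,
    [/\ forall i, 0 <= lam i,
        forall i, i \notin S -> lam i = 0,
        \sum_i lam i = j%:R &
        ratv x = \sum_i lam i *: ratv (v i)].

(* #(jF \cap M) for the face F = conv{v i | i in S} *)
Definition ehr (v : 'I_d.+1 -> 'rV[int]_d) (S : {set 'I_d.+1}) (j : nat) : nat :=
  #|` fset_set [set x | in_dilate v S j x] |%fset.

(* coefficient of t^n in h^*_F(t) = (1-t)^{dim F + 1} \sum_j #(jF \cap M) t^j,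
   with dim F + 1 = #|S|, and h^*_\emptyset = 1. *)
Definition hstar (v : 'I_d.+1 -> 'rV[int]_d) (S : {set 'I_d.+1}) (n : nat) : int :=
  if #|S| == 0%N then (n == 0%N)%:R
  else \sum_(i < n.+1 | (i <= #|S|)%N)
         (-1) ^+ i * ('C(#|S|, i))%:R * (ehr v S (n - i))%:R.

(* g-polynomial of the face-poset interval [F, G] (F, G given by vertex sets
   A \subset B); its rank is #|B| - #|A| and rk(X) = #|X| - #|A|.
   The recursion is the one of the paper: for rank r > 0,
   h_{[A,B]} = \sum_{A < X <= B} (t-1)^{rk X - 1} g_{[X,B]},
   g_{[A,B]} = \sum_{0 <= i < r/2} (h_i - h_{i-1}) t^i;  for r = 0, g = 1.
   [gpoly_fuel k] computes it for any fuel k >= rank. *)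
Fixpoint gpoly_fuel (k : nat) (A B : {set 'I_d.+1}) : {poly int} :=
  match k with
  | 0%N => 1
  | k'.+1 =>
    let r := (#|B| - #|A|)%N in
    if r == 0%N then 1 else
    let h := \sum_(X : {set 'I_d.+1} | (A \proper X) && (X \subset B))
               ('X - 1) ^+ (#|X| - #|A| - 1) * gpoly_fuel k' X B in
    \poly_(i < r) (if (i.*2 < r)%N
                   then h`_i - (if i is i'.+1 then h`_i' else 0)
                   else 0)
  end.

Definition gpoly (A B : {set 'I_d.+1}) : {poly int} :=
  gpoly_fuel (#|B| - #|A|) A B.

(* coefficient of t^n in
   S~(P,t) = \sum_{\emptyset <= F <= P} (-1)^{dim P - dim F} h^*_F(t) g_{[F,P]}(t),
   dim P - dim F = d - (#|S| - 1) = d + 1 - #|S|. *)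
Definition Stilde (v : 'I_d.+1 -> 'rV[int]_d) (n : nat) : int :=
  \sum_(S : {set 'I_d.+1})
     (-1) ^+ (d.+1 - #|S|) *
     \sum_(i < n.+1) hstar v S i * (gpoly S [set: 'I_d.+1]%SET)`_(n - i).

(* (y, h) \in M (+) Z lies in the interior of the half-open parallelepiped
   spanned by the lifts (v i, 1). *)
Definition in_int_Pi (v : 'I_d.+1 -> 'rV[int]_d) (y : 'rV[int]_d) (h : int) : Prop :=
  exists lam : 'I_d.+1 -> rat,
    [/\ forall i, 0 < lam i < 1,
        ratv y = \sum_i lam i *: ratv (v i) &
        h%:~R = \sum_i lam i].

Definition count_int_Pi (v : 'I_d.+1 -> 'rV[int]_d) (m : int) : nat :=
  #|` fset_set [set y | in_int_Pi v y m] |%fset.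

Definition StildeZ (v : 'I_d.+1 -> 'rV[int]_d) (m : int) : int :=
  match m with Posz n => Stilde v n | Negz _ => 0 end.

End Simplex.

(* Main.v *)
Require Import Defs.
From HB Require Import structures.
From mathcomp Require Import all_boot all_order all_algebra.
From mathcomp Require Import finmap.
From mathcomp Require Import boolp classical_sets cardinality.
Import Order.TTheory GRing.Theory Num.Theory.
Local Open Scope ring_scope.
From mathcomp Require Import zify.

Lemma sum_interval_pow (R : comNzRingType) (T : finType) (A B : {set T}) (x : R) : A \subset B ->
  \sum_(J : {set T} | (A \subset J) && (J \subset B)) x ^+ #|J :\: A| = (x + 1) ^+ #|B :\: A|.
Proof.
move=> AB.
have := @bigA_distr R 0 1 *%R +%R T
   (fun i : T => if i \in A then 1 else if i \in B then x else 0)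
   (fun i => if i \in A then 0 else 1).
rewrite /=.
have -> : \prod_(i : T) ((if i \in A then 1 else if i \in B then x else 0) +
       (if i \in A then 0 else 1)) = (x + 1) ^+ #|B :\: A|.
  rewrite (bigID (mem (B :\: A))) /= (eq_bigr (fun _ => x + 1)); last first.
    by move=> i; rewrite inE => /andP[/negbTE -> ->].
  rewrite prodr_const (eq_bigr (fun _ => 1)); last first.
    move=> i; rewrite inE negb_and negbK; case: (i \in A) => /=.
      by rewrite addr0.
    by move=> /negbTE ->; rewrite add0r.
  rewrite big1_eq mulr1; congr (_ ^+ _); apply: eq_card => i; by rewrite !inE.
move=> ->; rewrite [RHS](bigID (fun J : {set T} => (A \subset J) && (J \subset B))) /=.
rewrite [X in _ = _ + X]big1 ?addr0.
  apply: eq_bigr => J /andP[AJ JB].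
  rewrite (eq_bigr (fun i => if i \in J :\: A then x else 1)); last first.
    move=> i _; rewrite inE; case: (boolP (i \in A)) => iA /=.
      by rewrite (fintype.subsetP AJ).
    by case: (boolP (i \in J)) => // iJ; rewrite (fintype.subsetP JB).
  by rewrite -big_mkcond /= prodr_const.
move=> J; rewrite negb_and => /orP[/subsetPn [i iA iJ]|/subsetPn [i iJ iB]].
  by rewrite (bigD1 i) //= (negbTE iJ) iA mul0r.
rewrite (bigD1 i) //= iJ (negbTE iB); case: (boolP (i \in A)); last by rewrite mul0r.
by move=> /(fintype.subsetP AB); rewrite (negbTE iB).
Qed.

Lemma sum_subset_pow (R : comNzRingType) (T : finType) (U : {set T}) (x : R) :
  \sum_(J : {set T} | J \subset U) x ^+ #|J| = (x + 1) ^+ #|U|.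
Proof.
rewrite -(finset.setD0 U) -(@sum_interval_pow R T finset.set0 U x (finset.sub0set U)).
by apply: eq_big => [J|J _]; rewrite ?finset.sub0set ?finset.setD0.
Qed.

Lemma gpoly_fuel1 d k (A B : {set 'I_d.+1}) : A \subset B -> gpoly_fuel k A B = 1.
Proof.
elim: k A => [//|k IH] A AB /=.
case: eqP => // /eqP r0.
set r := (#|B| - #|A|)%N.
set h := \sum_(X | _) _.
have hE : h = \sum_(X : {set 'I_d.+1} | (A \proper X) && (X \subset B)) ('X - 1) ^+ (#|X| - #|A| - 1).
  by apply: eq_bigr => X /andP[_ XB]; rewrite IH // mulr1.
have cBA : #|B :\: A| = r by rewrite cardsD (finset.setIidPr AB).
have key : ('X - 1) * h = 'X^r - 1.
  have := @sum_interval_pow {poly int} _ A B ('X - 1) AB.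
  rewrite subrK cBA => <-.
  rewrite (bigD1 A) /= ?subxx ?lexx // finset.setDv cards0 expr0 addrC addrK.
  rewrite hE mulr_sumr; apply: eq_big => X.
    rewrite finset.properEneq eq_sym.
    by case: (X != A); case: (X \subset B); case: (A \subset X).
  move=> /andP[AXp _].
  rewrite -exprS cardsD (finset.setIidPr (proper_sub AXp)); congr (_ ^+ _).
  have := proper_card AXp.
  lia.
have hE2 : h = \sum_(i < r) 'X^i.
  have nz : ('X - 1 : {poly int}) != 0 by exact: monic_neq0 (monicXsubC 1).
  by apply: (mulfI nz); rewrite key subrX1.
have hc : forall i, h`_i = (i < r)%N%:R.
  move=> i; rewrite hE2 coef_sum.
  under eq_bigr => j _ do rewrite coefXn.
  case: (ltnP i r) => ir.
    by rewrite (bigD1 (Ordinal ir)) //= eqxx big1 ?addr0 // => j ji; case: eqP => // ij; case/eqP: ji; apply: val_inj.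
  by rewrite big1 // => j _; case: eqP => // ji; move: (ltn_ord j); rewrite -ji ltnNge ir.
apply/polyP => i; rewrite coef_poly coefC.
case: i => [|i]; first by rewrite hc lt0n r0.
case: ifP => // ir; case: ifP => // i2r.
by rewrite !hc ir (ltn_trans (ltnSn i) ir) subrr.
Qed.

Section Geo.
Variable d : nat.
Variable v : 'I_d.+1 -> 'rV[int]_d.
Implicit Types x y : 'rV[int]_d.
Implicit Types S I : {set 'I_d.+1}.

Lemma ratvD x y : ratv (x + y) = ratv x + ratv y.
Proof. by apply/rowP => k; rewrite !mxE intrD. Qed.
Lemma ratv0 : ratv (0 : 'rV[int]_d) = 0.
Proof. by apply/rowP => k; rewrite !mxE. Qed.
Lemma ratvN x : ratv (- x) = - ratv x.
Proof. by apply/rowP => k; rewrite !mxE intrN. Qed.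
Lemma ratv_inj : injective (@ratv d).
Proof.
move=> x y /rowP E; apply/rowP => k; have := E k; rewrite !mxE.
by move/eqP; rewrite eqr_int => /eqP.
Qed.
Lemma ratv_sum (I : finType) (P : pred I) (F : I -> 'rV[int]_d) :
  ratv (\sum_(i | P i) F i) = \sum_(i | P i) ratv (F i).
Proof. exact: (big_morph _ ratvD ratv0). Qed.

Lemma fin_dil S j : finite_set [set x | in_dilate v S j x].
Proof.
pose B := (\sum_i \sum_(k < d) `|v i ord0 k|)%N.
pose N := (j * B)%N.
pose f := fun g : {ffun 'I_d -> 'I_(N.*2).+1} => \row_k (((g k) : nat)%:Z - N%:Z).
apply: (sub_finite_set (B := f @` setT)); last exact: finite_image.
move=> x [lam [l0 _ ls xE]].
have bnd : forall k, (`|x ord0 k| <= N)%N.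
  move=> k; have := congr1 (fun r : 'M[rat]_(1,d) => r ord0 k) xE; rewrite !mxE summxE /=.
  under eq_bigr => i _ do rewrite !mxE.
  move=> e.
  suff : `|(x ord0 k)%:~R : rat| <= N%:R.
    by rewrite -intr_norm -natr_absz ler_nat.
  rewrite e (le_trans (ler_norm_sum _ _ _)) //.
  apply: (@le_trans _ _ (\sum_i lam i * B%:R)).
    apply: ler_sum => i _; rewrite normrM (ger0_norm (l0 i)).
    apply: ler_wpM2l => //; rewrite -intr_norm.
    have : (`|v i ord0 k| <= B)%N.
      rewrite /B (bigD1 i) //= (bigD1 k) //=.
      apply: (leq_trans _ (leq_addr _ _)); exact: leq_addr.
    by rewrite -(ler_nat rat) natr_absz.
  by rewrite -mulr_suml ls /N natrM.
exists [ffun k => inord (absz (x ord0 k + N%:Z))] => //.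
apply/rowP => k; rewrite !mxE ffunE inordK.
  have := bnd k; rewrite [x 0 k]/(x ord0 k); move: (x ord0 k) => z.
  lia.
by have := bnd k; lia.
Qed.

Hypothesis hv : affinely_independent v.

Definition rep (n : nat) y (lam : 'I_d.+1 -> rat) :=
  [/\ forall i, 0 <= lam i, \sum_i lam i = n%:R & ratv y = \sum_i lam i *: ratv (v i)].

Lemma rep_uniq n n' y lam lam' : rep n y lam -> rep n' y lam' -> n = n' -> lam =1 lam'.
Proof.
move=> [_ s1 e1] [_ s2 e2] nn'.
have := hv (fun i => lam i - lam' i).
rewrite sumrB s1 s2 nn' subrr => /(_ erefl).
have -> : \sum_i (lam i - lam' i) *: ratv (v i) = 0.
  by under eq_bigr => i _ do rewrite scalerBl; rewrite sumrB -e1 -e2 subrr.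
by move=> /(_ erefl) h i; apply/eqP; rewrite -subr_eq0 h.
Qed.
Arguments rep_uniq [n n' y lam lam'].

Definition lamof n y : 'I_d.+1 -> rat :=
  match pselect (exists lam, rep n y lam) with
  | left H => proj1_sig (cid H)
  | right _ => fun _ => 0 end.

Lemma lamofP n y : (exists lam, rep n y lam) -> rep n y (lamof n y).
Proof. by rewrite /lamof; case: pselect => // H _; case: cid. Qed.

Definition Dn n : set 'rV[int]_d := [set y | in_dilate v [set: 'I_d.+1]%SET n y].

Lemma DnP n y : Dn n y <-> exists lam, rep n y lam.
Proof.
split; first by move=> [lam [? _ ? ?]]; exists lam.
by move=> [lam [? ? ?]]; exists lam; split => // i; rewrite finset.in_setT.
Qed.

Definition Pd n (S I : {set 'I_d.+1}) y :=
  exists lam, [/\ rep n y lam, forall i, i \notin S -> lam i = 0 &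
                 forall i, i \in I -> 1 <= lam i].

Definition supp n y := [set i | lamof n y i != 0].
Definition Gs n y := [set i | 1 <= lamof n y i].

Lemma Pd_iff n S I y : Dn n y ->
  Pd n S I y <-> (supp n y \subset S) && (I \subset Gs n y).
Proof.
move=> /DnP /lamofP r0; split.
  move=> [lam [r hS hI]].
  have E := rep_uniq r r0 erefl.
  apply/andP; split; apply/fintype.subsetP => i; rewrite !inE -E.
    by apply: contraR => /hS ->.
  exact: hI.
move=> /andP[sS IG]; exists (lamof n y); split => // i.
  by move=> iS; apply/eqP; apply: contraR iS => h; apply: (fintype.subsetP sS); rewrite inE.
by move=> /(fintype.subsetP IG); rewrite inE.
Qed.

Lemma cnt_eq n (A : set 'rV[int]_d) : (A `<=` Dn n)%classic ->
  #|` fset_set A| = (\sum_(y <- fset_set (Dn n)) `[< A y >])%N.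
Proof.
move=> AD.
have fD : finite_set (Dn n) := fin_dil _ n.
have fA : finite_set A := sub_finite_set AD fD.
rewrite card_fset_sum1.
have -> : fset_set A = [fset y in fset_set (Dn n) | `[< A y >]]%fset.
  apply/fsetP => y; rewrite in_fset_set // !inE in_fset_set //.
  apply/idP/andP => [/set_mem yA|[_ /asboolP /mem_set]] //.
  by split; [apply/mem_set/AD | apply/asboolP].
rewrite -big_fset_condE big_mkcond /=.
by apply: eq_bigr => y _; case: asboolP.
Qed.

Lemma sum_ind (I : {set 'I_d.+1}) : \sum_i ((i \in I)%:R : rat) = #|I|%:R.
Proof.
rewrite -sum1_card natr_sum [RHS]big_mkcond /=.
by apply: eq_bigr => i _; case: (i \in I).
Qed.

Lemma sum_indZ (I : {set 'I_d.+1}) :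
  \sum_i ((i \in I)%:R : rat) *: ratv (v i) = ratv (\sum_(i in I) v i).
Proof.
rewrite ratv_sum [RHS]big_mkcond /=.
by apply: eq_bigr => i _; case: (i \in I); rewrite ?scale1r ?scale0r.
Qed.

Lemma ehr_shift n (S I : {set 'I_d.+1}) : I \subset S -> (#|I| <= n)%N ->
  ehr v S (n - #|I|) = #|` fset_set [set y | Pd n S I y]|.
Proof.
move=> IS In.
pose c := \sum_(i in I) v i.
pose sh := fun x => x + c.
have E : [set y | Pd n S I y]%classic = (sh @` [set x | in_dilate v S (n - #|I|) x])%classic.
  apply/seteqP; split.
    move=> y [lam [[l0 ls ly] hS hI]].
    exists (y - c); last by rewrite /sh subrK.
    exists (fun i => lam i - (i \in I)%:R); split.
    - by move=> i; case iI: (i \in I); [rewrite subr_ge0 hI | rewrite subr0].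
    - move=> i iS; rewrite hS //.
      by have -> : (i \in I) = false by apply: contraNF iS; apply: (fintype.subsetP IS).
    - by rewrite sumrB ls sum_ind natrB.
    - rewrite ratvD ratvN ly /=.
      rewrite [RHS](eq_bigr (fun i => lam i *: ratv (v i) - ((i \in I)%:R : rat) *: ratv (v i))); last by move=> i _; rewrite scalerBl.
      by rewrite sumrB sum_indZ.
  move=> _ [x [lam [l0 hS ls lx]] <-].
  exists (fun i => lam i + (i \in I)%:R); split; first split.
  - by move=> i; apply: addr_ge0.
  - by rewrite big_split /= ls sum_ind -natrD subnK.
  - rewrite /sh ratvD lx.
    rewrite [RHS](eq_bigr (fun i => lam i *: ratv (v i) + ((i \in I)%:R : rat) *: ratv (v i))); last by move=> i _; rewrite scalerDl.
    by rewrite big_split /= sum_indZ.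
  - move=> i iS; rewrite hS //.
    by have -> : (i \in I) = false by apply: contraNF iS; apply: (fintype.subsetP IS).
  - by move=> i iI; rewrite iI lerDr.
rewrite /ehr E fset_set_image ?fin_dil //.
apply/esym/eqP/card_in_imfsetP => x y _ _; apply: addIr.
exact: fin_dil.
Qed.

Lemma aux_mul (a : int) (C e : nat) : a * C%:R * e%:R = a * e%:R *+ C.
Proof. by rewrite -mulrA -natrM mulnC natrM mulrA mulr_natr. Qed.

Lemma Pd_card n S I y : Pd n S I y -> (#|I| <= n)%N.
Proof.
move=> [lam [[l0 ls _] _ hI]].
rewrite -(ler_nat rat) -ls -sum_ind; apply: ler_sum => i _.
by case iI: (i \in I); [apply: hI | apply: l0].
Qed.

Lemma cnt0 n S I : ~~ (#|I| <= n)%N -> #|` fset_set [set y | Pd n S I y]%classic| = 0%N.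
Proof.
move=> In; have -> : [set y | Pd n S I y]%classic = set0; last by rewrite fset_set0.
by apply/seteqP; split => // y /Pd_card; rewrite (negbTE In).
Qed.

Lemma hstar_sum n S : hstar v S n = \sum_(I : {set 'I_d.+1} | I \subset S)
   (-1) ^+ #|I| * (#|` fset_set [set y | Pd n S I y]%classic|)%:R.
Proof.
rewrite /hstar; case: eqP => [/eqP|/eqP S0].
  rewrite cards_eq0 => /eqP ->.
  rewrite (big_pred1 finset.set0); last by move=> I; rewrite finset.subset0.
  rewrite cards0 expr0 mul1r; congr (_ %:R).
  have P0 : forall y lam, rep n y lam -> (forall i, i \notin finset.set0 -> lam i = 0) ->
      n = 0%N /\ y = 0.
    move=> y lam [_ ls ly] hS.
    have l0 : forall i, lam i = 0 by move=> i; rewrite hS // inE.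
    rewrite big1 // in ls; rewrite big1 in ly; last by move=> i _; rewrite l0 scale0r.
    split; first by apply/eqP; rewrite -(eqr_nat rat) -ls.
    by apply: ratv_inj; rewrite ly ratv0.
  case: n P0 => [|n] P0.
    have -> : [set y | Pd 0 finset.set0 finset.set0 y]%classic = [set 0]%classic.
      apply/seteqP; split => y.
        by move=> [lam [r hS _]]; have [_ ->] := P0 _ _ r hS.
      move=> /= ->; exists (fun _ => 0); split; [split| by [] | by move=> i; rewrite inE].
      - by [].
      - by rewrite big1.
      - by rewrite ratv0 big1 // => i _; rewrite scale0r.
    by rewrite fset_set1 cardfs1.
  have -> : [set y | Pd n.+1 finset.set0 finset.set0 y]%classic = set0.
    by apply/seteqP; split => // y [lam [r hS _]]; have [] := P0 _ _ r hS.
  by rewrite fset_set0 cardfs0.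
rewrite (bigID (fun I => #|I| <= n)%N) /= [X in _ = _ + X]big1 ?addr0; last first.
  by move=> I /andP[_ In]; rewrite cnt0 // mulr0.
rewrite (partition_big (fun I => inord #|I| : 'I_n.+1) xpredT) //=.
rewrite big_mkcond /=; apply: eq_bigr => j _.
rewrite (eq_bigl (fun I => (I \subset S) && (#|I| == j))); last first.
  move=> I; rewrite -andbA; congr (_ && _).
  case: (leqP #|I| n) => In /=.
    by rewrite -val_eqE /= inordK.
  by apply/esym/negbTE/negP => /eqP E; have := ltn_ord j; rewrite -E ltnS leqNgt In.
rewrite (eq_bigr (fun _ => (-1)^+j * (ehr v S (n - j))%:R)); last first.
  move=> I /andP[IS /eqP Ij]; rewrite -Ij ehr_shift //.
  by rewrite Ij -ltnS.
rewrite sumr_const.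
have -> : #|[pred I : {set 'I_d.+1} | (I \subset S) && (#|I| == j)]| = 'C(#|S|, j).
  by rewrite -cards_draws; apply: eq_card => I; rewrite !inE.
case: leqP => hj; first by rewrite aux_mul.
by rewrite bin_small // mulr0n.
Qed.

Lemma Pd_Dn n S I y : Pd n S I y -> Dn n y.
Proof. by move=> [lam [r _ _]]; apply/DnP; exists lam. Qed.

Lemma Gs_supp n y : Gs n y \subset supp n y.
Proof.
apply/fintype.subsetP => i; rewrite !inE => h.
by apply/eqP => e; rewrite e ler10 in h.
Qed.

Lemma inF n y : y \in fset_set (Dn n) -> Dn n y.
Proof. by rewrite (in_fset_set (fin_dil _ n)) => /set_mem. Qed.

Lemma alt_sub (U : {set 'I_d.+1}) :
  \sum_(J : {set 'I_d.+1} | J \subset U) (-1) ^+ #|J| = (U == finset.set0)%:R :> int.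
Proof.
by rewrite sum_subset_pow addNr expr0n cards_eq0; case: (U == _).
Qed.

Lemma hstar_F n S : hstar v S n = \sum_(y <- fset_set (Dn n))
   ((supp n y \subset S) && (Gs n y == finset.set0))%:R.
Proof.
rewrite hstar_sum.
rewrite (eq_bigr (fun I => \sum_(y <- fset_set (Dn n)) (-1) ^+ #|I| * (`[< Pd n S I y >] : nat)%:R)); last first.
  move=> I _; rewrite (@cnt_eq n [set y | Pd n S I y]%classic); last first.
    by move=> y /= /Pd_Dn.
  by rewrite natr_sum mulr_sumr.
rewrite exchange_big /= big_seq [RHS]big_seq; apply: eq_bigr => y /inF yD.
have E I : `[< Pd n S I y >] = (supp n y \subset S) && (I \subset Gs n y).
  have [h1 h2] := Pd_iff n S I y yD.
  by apply/asboolP/idP; [exact: h1 | exact: h2].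
rewrite (eq_bigr (fun I => (-1)^+#|I| * ((supp n y \subset S) && (I \subset Gs n y) : nat)%:R)); last by move=> I _; rewrite E.
case sS: (supp n y \subset S) => /=; last by rewrite big1 // => I _; rewrite mulr0.
rewrite (eq_bigr (fun I => if I \subset Gs n y then (-1)^+#|I| else 0)); last first.
  by move=> I _; case: (I \subset Gs n y); rewrite ?mulr1 ?mulr0.
rewrite -alt_sub -big_mkcondr /=; apply: eq_bigl => I.
apply/andP/idP => [[] //|IG]; split => //.
exact: fintype.subset_trans IG (fintype.subset_trans (Gs_supp n y) sS).
Qed.

Lemma alt_sup (U : {set 'I_d.+1}) :
  \sum_(S : {set 'I_d.+1}) (-1) ^+ (d.+1 - #|S|) * (U \subset S : nat)%:R = (U == [set: 'I_d.+1]%SET)%:R :> int.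
Proof.
rewrite (reindex_inj (@finset.setC_inj _)) /=.
rewrite (eq_bigr (fun S => if S \subset ~: U then (-1) ^+ #|S| else 0)); last first.
  move=> S _; rewrite finset.subsetC.
  have -> : (d.+1 - #|~: S|)%N = #|S|.
    by have := cardsC S; rewrite card_ord; lia.
  by case: (U \subset ~: S); rewrite ?mulr1 ?mulr0.
rewrite -big_mkcond alt_sub; congr (_ %:R); congr nat_of_bool.
apply/eqP/eqP => [h|->]; last by rewrite finset.setCT.
by rewrite -(finset.setCK U) h finset.setC0.
Qed.

Lemma Stilde_F n : Stilde v n = \sum_(y <- fset_set (Dn n))
   ((supp n y == [set: 'I_d.+1]%SET) && (Gs n y == finset.set0))%:R.
Proof.
rewrite /Stilde.
rewrite (eq_bigr (fun S => (-1) ^+ (d.+1 - #|S|) * hstar v S n)); last first.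
  move=> S _; congr (_ * _).
  rewrite /gpoly gpoly_fuel1 ?finset.subsetT //.
  rewrite big_ord_recr /= subnn coef1 eqxx mulr1 big1 ?add0r // => i _.
  by rewrite coef1 subn_eq0 leqNgt ltn_ord mulr0.
under eq_bigr => S _ do rewrite hstar_F mulr_sumr.
rewrite exchange_big /=; apply: eq_bigr => y _.
case G0: (Gs n y == finset.set0); last first.
  by rewrite andbF big1 // => S _; rewrite andbF mulr0.
rewrite andbT -alt_sup; apply: eq_bigr => S _; by rewrite andbT.
Qed.

Lemma count_F (n : nat) : count_int_Pi v n = (\sum_(y <- fset_set (Dn n))
   ((supp n y == [set: 'I_d.+1]%SET) && (Gs n y == finset.set0)))%N.
Proof.
rewrite /count_int_Pi (@cnt_eq n [set y | in_int_Pi v y n]%classic); last first.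
  move=> y [lam [lb ly lsum]]; apply/DnP; exists lam; split => //.
  by move=> i; case/andP: (lb i) => /ltW.
rewrite big_seq [RHS]big_seq; apply: eq_bigr => y /inF yD.
have r0 := lamofP n y (proj1 (DnP n y) yD).
congr nat_of_bool; apply/asboolP/idP.
  move=> [lam [lb ly ls]].
  have rl : rep n y lam by split => // i; case/andP: (lb i) => /ltW.
  have E := rep_uniq rl r0 erefl.
  apply/andP; split; apply/eqP/finset.setP => i; rewrite !inE -E.
    by case/andP: (lb i) => /lt0r_neq0.
  by case/andP: (lb i) => _ h; rewrite leNgt h.
move=> /andP[/eqP sT /eqP G0]; exists (lamof n y); case: r0 => l0 ls ly; split => //.
  move=> i; have : i \in supp n y by rewrite sT inE.
  have : i \notin Gs n y by rewrite G0 inE.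
  rewrite !inE => h1 h2; apply/andP; split; first by rewrite lt_def h2 l0.
  by rewrite ltNge.
Qed.

Lemma count_neg k : count_int_Pi v (Negz k) = 0%N.
Proof.
rewrite /count_int_Pi.
have -> : [set y | in_int_Pi v y (Negz k)]%classic = set0; last by rewrite fset_set0.
apply/seteqP; split => // y [lam [lb _ ls]].
have : 0 <= \sum_i lam i by apply: sumr_ge0 => i _; case/andP: (lb i) => /ltW.
rewrite -ls NegzE intrN oppr_ge0.
rewrite (_ : ((k.+1)%:Z)%:~R = k.+1%:R :> rat) //.
by rewrite leNgt ltr0Sn.
Qed.

End Geo.

Theorem proposition4p6 (d : nat) (v : 'I_d.+1 -> 'rV[int]_d) :
  affinely_independent v ->
  (forall m : int, StildeZ v m = (count_int_Pi v m)%:R) /\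
  (forall n : nat, Stilde v n != 0 ->
     exists2 k : nat, (n <= k)%N & hstar v [set: 'I_d.+1]%SET k != 0).
Proof.
move=> hv; split.
  case => [n|k].
    by rewrite /StildeZ (@Stilde_F _ _ hv) (@count_F _ _ hv) natr_sum.
  by rewrite /StildeZ count_neg.
move=> n Sn; exists n => //.
move: Sn; rewrite (@Stilde_F _ _ hv) (@hstar_F _ _ hv) -!natr_sum !pnatr_eq0 -!lt0n.
move=> /leq_trans; apply; apply: leq_sum => y _.
by rewrite finset.subsetT; case: (_ == _); case: (_ == _).
Qed.
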